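(* Let $\Lambda$ be a finitely aligned left cancellative small category, let $\alpha,\beta\in\Lambda$ with $s(\alpha)=s(\beta)$ and $\alpha\beta^*\in S_\Lambda^{\mathrm{Iso}}$, and write $\alpha\Lambda\cap\beta\Lambda=\bigcup_{i=1}^n\gamma_i\Lambda$ with $\gamma_i\in\Lambda$. Then $D_{\alpha\Lambda}=D_{\beta\Lambda}=\bigcup_{i=1}^nD_{\gamma_i\Lambda}$. Furthermore, if $\gamma\in\Lambda$ satisfies $\gamma\Lambda\cap\alpha\Lambda\neq\emptyset$ or $\gamma\Lambda\cap\beta\Lambda\neq\emptyset$, then there exists $1\le i\le n$ with $\gamma\Lambda\cap\gamma_i\Lambda\neq\emptyset$.
   Context: $\Lambda$ is a left cancellative small category (range $r$, source $s$), finitely aligned: each $\alpha\Lambda\cap\beta\Lambda$ is a finite union of sets $f\Lambda$, where $\alpha\Lambda=\{\alpha\beta:s(\alpha)=r(\beta)\}$. Each $\alpha$ is viewed as the partial bijection $s(\alpha)\Lambda\to\alpha\Lambda$, $\beta\mapsto\alpha\beta$, in the symmetric inverse monoid $\mathcal{I}(\Lambda)$, with inverse $\alpha^*$; $S_\Lambda$ is the inverse semigroup they generate. $S_\Lambda^{\mathrm{Iso}}=\{s\in S_\Lambda: ses^*e\neq0\text{ for all idempotents }0\neq e\leqslant s^*s\}$. The constructible sets are $\mathcal{J}(\Lambda)=\{X\subseteq\Lambda:\mathrm{Id}_X\in S_\Lambda\}$, a semilattice under intersection isomorphic to the idempotent semilattice of $S_\Lambda$ (e.g. $\alpha\Lambda\in\mathcal{J}(\Lambda)$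 since $\mathrm{Id}_{\alpha\Lambda}=\alpha\alpha^*$). Filters are nonempty proper subsets of $\mathcal{J}(\Lambda)$ (not containing $\emptyset$) closed under intersection and upward closed; tight filters are those in the closure of the maximal filters in $\{0,1\}^{\mathcal{J}(\Lambda)}$. For $X\in\mathcal{J}(\Lambda)$, $D_X=\{\xi\text{ tight filter}:X\in\xi\}$. *)

(* Defs.v *)
From Stdlib Require Import List.
Set Implicit Arguments.

(* A small category given by its morphism type, with a total composition
   function that is only constrained on composable pairs (s a = r b). *)
Record LCSC := {
  Obj : Type;
  Mor : Type;
  rng : Mor -> Obj;
  src : Mor -> Obj;
  comp : Mor -> Mor -> Mor;           (* comp a b = "a b" when src a = rng b *)
  idm : Obj -> Mor;
  rng_idm : forall v, rng (idm v) = v;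
  src_idm : forall v, src (idm v) = v;
  rng_comp : forall a b, src a = rng b -> rng (comp a b) = rng a;
  src_comp : forall a b, src a = rng b -> src (comp a b) = src b;
  comp_idl : forall a, comp (idm (rng a)) a = a;
  comp_idr : forall a, comp a (idm (src a)) = a;
  compA : forall a b c, src a = rng b -> src b = rng c ->
            comp a (comp b c) = comp (comp a b) c;
  left_cancel : forall a b c, src a = rng b -> src a = rng c ->
            comp a b = comp a c -> b = c
}.

Section Defs.
Variable C : LCSC.

Definition mset := Mor C -> Prop.

Definition Lam (a : Mor C) : mset :=
  fun x => exists b, src C a = rng C b /\ x = comp C a b.

Definition finitely_aligned : Prop :=
  forall a b : Mor C, exists l : list (Mor C),
    forall x, (Lam a x /\ Lam b x) <-> exists g, In g l /\ Lam g x.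

(* partial maps on Lambda, as relations (graph: f x y means f(x) = y) *)
Definition prel := Mor C -> Mor C -> Prop.

(* alpha as the partial bijection s(alpha)Lambda -> alpha Lambda *)
Definition morR (a : Mor C) : prel :=
  fun x y => rng C x = src C a /\ y = comp C a x.

(* compR f g = f o g (apply g first) *)
Definition compR (f g : prel) : prel := fun x z => exists y, g x y /\ f y z.
Definition invR (f : prel) : prel := fun x y => f y x.
Definition eqR (f g : prel) : Prop := forall x y, f x y <-> g x y.
Definition idR (X : mset) : prel := fun x y => X x /\ x = y.
Definition zeroR (f : prel) : Prop := forall x y, ~ f x y.

Inductive inS : prel -> Prop :=
| inS_gen : forall a, inS (morR a)
| inS_inv : forall f, inS f -> inS (invR f)
| inS_comp : forall f g, inS f -> inS g -> inS (compR f g)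
| inS_ext : forall f g, inS f -> eqR f g -> inS g.

Definition isIdem (e : prel) : Prop := inS e /\ eqR (compR e e) e.
Definition leR (e f : prel) : Prop := eqR e (compR e f).

Definition Iso (t : prel) : Prop :=
  inS t /\
  forall e, isIdem e -> ~ zeroR e -> leR e (compR (invR t) t) ->
    ~ zeroR (compR (compR (compR t e) (invR t)) e).

Definition J (X : mset) : Prop := inS (idR X).

Definition isFilter (xi : mset -> Prop) : Prop :=
  (exists X, xi X) /\
  (forall X, xi X -> J X) /\
  ~ (exists X, xi X /\ forall x, ~ X x) /\
  (forall X Y, xi X -> xi Y -> xi (fun x => X x /\ Y x)) /\
  (forall X Y, xi X -> J Y -> (forall x, X x -> Y x) -> xi Y).

Definition maxFilter (xi : mset -> Prop) : Prop :=
  isFilter xi /\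
  forall eta, isFilter eta -> (forall X, xi X -> eta X) -> forall X, eta X -> xi X.

(* tight filter: a filter lying in the closure of the maximal filters in
   {0,1}^J(Lambda) (product topology; closure unfolded via basic opens) *)
Definition tight (xi : mset -> Prop) : Prop :=
  isFilter xi /\
  forall (F G : list mset),
    (forall X, In X F -> xi X) ->
    (forall Y, In Y G -> J Y /\ ~ xi Y) ->
    exists eta, maxFilter eta /\ (forall X, In X F -> eta X) /\
                (forall Y, In Y G -> ~ eta Y).

Definition D (X : mset) : (mset -> Prop) -> Prop := fun xi => tight xi /\ xi X.

End Defs.

Arguments Lam {C} a _.
Arguments morR {C} a _ _.
Arguments compR {C} f g _ _.
Arguments invR {C} f _ _.
Arguments eqR {C} f g.
Arguments idR {C} X _ _.
Arguments zeroR {C} f.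
Arguments inS {C} _.
Arguments isIdem {C} e.
Arguments leR {C} e f.
Arguments Iso {C} t.
Arguments J {C} X.
Arguments isFilter {C} xi.
Arguments maxFilter {C} xi.
Arguments tight {C} xi.
Arguments D {C} X _.

(* Main.v *)
Require Import Defs.
From Stdlib Require Import List Classical.
Set Implicit Arguments.
Unset Strict Implicit.

Lemma t_spec (C : LCSC) (a b x y : Mor C) :
  compR (morR a) (invR (morR b)) x y <->
  exists w, rng C w = src C b /\ x = comp C b w /\ rng C w = src C a /\ y = comp C a w.
Proof.
  unfold compR, invR, morR; split.
  - intros [w [[H1 H2] [H3 H4]]]; exists w; tauto.
  - intros [w [H1 [H2 [H3 H4]]]]; exists w; tauto.
Qed.

Lemma J_Lam (C : LCSC) (g : Mor C) : J (Lam g).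
Proof.
  unfold J. apply (inS_ext (inS_comp (inS_gen _ g) (inS_inv (inS_gen _ g)))).
  intros x z; unfold compR, invR, morR, idR, Lam; split.
  - intros [y [[H1 H2] [H3 H4]]]; subst; split; [exists y; auto|auto].
  - intros [[w [H1 H2]] H3]; subst; exists w; auto.
Qed.

Lemma J_inter (C : LCSC) (X Y : mset C) : J X -> J Y -> J (fun x => X x /\ Y x).
Proof.
  intros HX HY; unfold J. apply (inS_ext (inS_comp HX HY)).
  intros x z; unfold compR, idR; split.
  - intros [y [[H1 H2] [H3 H4]]]; subst; auto.
  - intros [[H1 H2] H3]; subst; exists z; auto.
Qed.

Lemma keyB (C : LCSC) (a b : Mor C) (Hs : src C a = src C b)
  (Hiso : Iso (compR (morR a) (invR (morR b)))) (X : mset C) :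
  J X -> (forall x, X x -> Lam b x) -> (exists x, X x) ->
  exists z, rng C z = src C a /\ X (comp C a z) /\ X (comp C b z).
Proof.
  intros HJ Hb Hne. destruct Hiso as [_ H].
  specialize (H (idR X)).
  assert (Hid : isIdem (idR X)).
  { split; [exact HJ|]. intros x y; unfold compR, idR; split.
    - intros [u [[H1 H2] [H3 H4]]]; subst; auto.
    - intros [H1 H2]; subst; exists y; auto. }
  assert (Hnz : ~ zeroR (idR X)).
  { intros Hz; destruct Hne as [x Hx]; apply (Hz x x); split; auto. }
  assert (Hle : leR (idR X) (compR (invR (compR (morR a) (invR (morR b))))
                                   (compR (morR a) (invR (morR b))))).
  { intros x y; split.
    - intros [Hx Hxy]; subst y. destruct (Hb x Hx) as [w [Hw Hxw]].
      exists x; split; [|split; auto].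
      exists (comp C a w); split; unfold invR; apply t_spec; exists w;
        repeat split; auto; congruence.
    - intros [y' [[u [H1 H2]] [Hy' Hyy]]]. unfold invR in H2.
      apply t_spec in H1; apply t_spec in H2.
      destruct H1 as [w [A1 [A2 [A3 A4]]]]; destruct H2 as [w' [B1 [B2 [B3 B4]]]].
      assert (w = w') by (apply (left_cancel C a); congruence).
      subst; split; auto. }
  specialize (H Hid Hnz Hle).
  apply NNPP; intro Hno; apply H; intros x z Hxz; apply Hno.
  destruct Hxz as [y1 [[Hx Heq] [y2 [Ht [y3 [[Hy2 _] Ht3]]]]]].
  unfold invR in Ht; apply t_spec in Ht.
  destruct Ht as [w [A1 [A2 [A3 A4]]]]; subst.
  exists w; auto.
Qed.

Lemma keyA (C : LCSC) (a b : Mor C) (Hs : src C a = src C b)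
  (Hiso : Iso (compR (morR a) (invR (morR b)))) (X : mset C) :
  J X -> (forall x, X x -> Lam a x) -> (exists x, X x) ->
  exists y, X y /\ Lam b y.
Proof.
  intros HJ Ha Hne.
  set (X' := fun x => exists w, rng C w = src C b /\ x = comp C b w /\ X (comp C a w)).
  assert (HJ' : J X').
  { unfold J. pose proof (proj1 Hiso) as Ht.
    apply (inS_ext (inS_comp (inS_inv Ht) (inS_comp HJ Ht))).
    intros x z; unfold compR at 1; unfold compR at 1; split.
    - intros [y [[u [H1 [H2 H3]]] H4]]. subst u. unfold invR in H4.
      apply t_spec in H1; apply t_spec in H4.
      destruct H1 as [w [A1 [A2 [A3 A4]]]]; destruct H4 as [w' [B1 [B2 [B3 B4]]]].
      assert (w = w') by (apply (left_cancel C a); congruence).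
      subst; split; auto. exists w'; auto.
    - intros [[w [H1 [H2 H3]]] H4]; subst.
      exists (comp C a w); split.
      + exists (comp C a w); split; [|split; auto].
        apply t_spec; exists w; repeat split; auto; congruence.
      + unfold invR; apply t_spec; exists w; repeat split; auto; congruence. }
  assert (Hb : forall x, X' x -> Lam b x).
  { intros x [w [H1 [H2 H3]]]; exists w; auto. }
  assert (Hne' : exists x, X' x).
  { destruct Hne as [x Hx]. destruct (Ha x Hx) as [w [Hw Hxw]]. subst.
    exists (comp C b w), w; repeat split; auto; congruence. }
  destruct (keyB Hs Hiso HJ' Hb Hne') as [z [Hz [[w [B1 [B2 B3]]] [w' [C1 [C2 C3]]]]]].
  assert (z = w') by (apply (left_cancel C b); congruence). subst w'.
  exists (comp C a z); split; auto. exists w; auto.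
Qed.

Lemma ultra (C : LCSC) (eta : mset C -> Prop) (Y : mset C) :
  maxFilter eta -> J Y -> ~ eta Y -> exists X, eta X /\ forall x, X x -> Y x -> False.
Proof.
  intros [Hf Hm] HJ HnY. apply NNPP; intro Hno.
  destruct Hf as [Hne [HJe [Hemp [Hint Hup]]]].
  set (eta' := fun Z => J Z /\ exists X, eta X /\ forall x, X x -> Y x -> Z x).
  assert (Hf' : isFilter eta').
  { split; [|split; [|split; [|split]]].
    - destruct Hne as [X HX]; exists Y; split; auto; exists X; split; auto.
    - intros X [H _]; auto.
    - intros [Z [[_ [X [HX Hsub]]] Hempty]]. apply Hno; exists X; split; auto.
      intros x Hx Hy; exact (Hempty x (Hsub x Hx Hy)).
    - intros Z1 Z2 [J1 [X1 [H1 S1]]] [J2 [X2 [H2 S2]]]. split.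
      + apply J_inter; auto.
      + exists (fun x => X1 x /\ X2 x); split; auto.
        intros x [h1 h2] hy; split; auto.
    - intros Z1 Z2 [J1 [X1 [H1 S1]]] J2 Hsub; split; auto. exists X1; split; auto. }
  apply HnY. apply (Hm eta' Hf').
  - intros X HX; split; auto. exists X; split; auto.
  - split; auto. destruct Hne as [X HX]; exists X; split; auto.
Qed.

Lemma build (C : LCSC) (eta : mset C -> Prop) (a : Mor C) (gs : list (Mor C)) :
  maxFilter eta -> eta (Lam a) -> (forall g, In g gs -> ~ eta (Lam g)) ->
  exists X, eta X /\ (forall x, X x -> Lam a x) /\
    (forall g x, In g gs -> X x -> Lam g x -> False).
Proof.
  intros Hm Ha. induction gs as [|g l IH]; intros Hn.
  - exists (Lam a); split; [auto|split; [auto|intros g x []]].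
  - destruct IH as [X [HX [HXa HXd]]]. { intros g' Hg'; apply Hn; simpl; auto. }
    destruct (ultra Hm (J_Lam g) (Hn g (or_introl eq_refl))) as [Xg [HXg Hd]].
    exists (fun x => X x /\ Xg x). repeat split.
    + destruct Hm as [[_ [_ [_ [Hint _]]]] _]; auto.
    + intros x [h _]; auto.
    + intros g' x [Hin|Hin] [h1 h2] hg; [subst; eauto | eauto].
Qed.

Lemma D_cover (C : LCSC) (a b : Mor C) (gs : list (Mor C))
  (Hg : forall x, (Lam a x /\ Lam b x) <-> exists g, In g gs /\ Lam g x)
  (key : forall X, J X -> (forall x, X x -> Lam a x) -> (exists x, X x) ->
         exists y, X y /\ Lam b y)
  (xi : mset C -> Prop) :
  tight xi -> xi (Lam a) -> exists g, In g gs /\ xi (Lam g).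
Proof.
  intros [Hf Htt] Ha. apply NNPP; intro Hno.
  destruct (Htt (Lam a :: nil) (map Lam gs)) as [eta [Hm [HF HG]]].
  - intros X [HX|[]]; subst; auto.
  - intros Y HY. apply in_map_iff in HY. destruct HY as [g [HgY Hin]]; subst.
    split; [apply J_Lam|]. intro H; apply Hno; exists g; auto.
  - assert (Hea : eta (Lam a)) by (apply HF; simpl; auto).
    assert (Hng : forall g, In g gs -> ~ eta (Lam g)).
    { intros g Hin; apply HG; apply in_map; auto. }
    destruct (build Hm Hea Hng) as [X [HX [HXa HXd]]].
    destruct Hm as [[_ [HJe [Hemp _]]] _].
    assert (Hne : exists x, X x).
    { apply NNPP; intro H; apply Hemp; exists X; split; auto.
      intros x Hx; apply H; exists x; auto. }
    destruct (key X (HJe X HX) HXa Hne) as [y [Hy Hby]].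
    destruct (proj1 (Hg y) (conj (HXa y Hy) Hby)) as [g [Hin Hgy]].
    exact (HXd g y Hin Hy Hgy).
Qed.

Lemma D_up (C : LCSC) (xi : mset C -> Prop) (g a : Mor C) :
  tight xi -> xi (Lam g) -> (forall x, Lam g x -> Lam a x) -> xi (Lam a).
Proof.
  intros [[_ [_ [_ [_ Hup]]]] _] Hx Hs. apply (Hup (Lam g)); auto. apply J_Lam.
Qed.

Unset Implicit Arguments.
Theorem lemma4p4 (C : LCSC) (Hfa : finitely_aligned C)
  (a b : Mor C) (gs : list (Mor C))
  (Hs : src C a = src C b)
  (Hiso : Iso (compR (morR a) (invR (morR b))))
  (Hg : forall x, (Lam a x /\ Lam b x) <-> exists g, In g gs /\ Lam g x) :
  (forall xi, D (Lam a) xi <-> D (Lam b) xi) /\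
  (forall xi, D (Lam a) xi <-> exists g, In g gs /\ D (Lam g) xi) /\
  (forall c : Mor C,
     ((exists x, Lam c x /\ Lam a x) \/ (exists x, Lam c x /\ Lam b x)) ->
     exists g, In g gs /\ exists x, Lam c x /\ Lam g x).
Proof.
  assert (Hga : forall g x, In g gs -> Lam g x -> Lam a x).
  { intros g x Hin Hx; apply (proj2 (Hg x)); eauto. }
  assert (Hgb : forall g x, In g gs -> Lam g x -> Lam b x).
  { intros g x Hin Hx; apply (proj2 (Hg x)); eauto. }
  assert (Hg' : forall x, (Lam b x /\ Lam a x) <-> exists g, In g gs /\ Lam g x).
  { intro x; rewrite <- Hg; tauto. }
  assert (keyb : forall X, J X -> (forall x, X x -> Lam b x) -> (exists x, X x) ->
         exists y, X y /\ Lam a y).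
  { intros X HJ Hb Hne. destruct (keyB Hs Hiso HJ Hb Hne) as [z [Hz [H1 H2]]].
    exists (comp C a z); split; auto. exists z; auto. }
  split; [|split].
  - intro xi; split; intros [Ht Hx]; split; auto.
    + destruct (D_cover Hg (keyA Hs Hiso) Ht Hx) as [g [Hin Hgx]].
      apply (D_up Ht Hgx); eauto.
    + destruct (D_cover Hg' keyb Ht Hx) as [g [Hin Hgx]].
      apply (D_up Ht Hgx); eauto.
  - intro xi; split.
    + intros [Ht Hx]. destruct (D_cover Hg (keyA Hs Hiso) Ht Hx) as [g [Hin Hgx]].
      exists g; split; auto; split; auto.
    + intros [g [Hin [Ht Hx]]]; split; auto. apply (D_up Ht Hx); eauto.
  - intros c [[x [Hc Ha]]|[x [Hc Hb]]].
    + destruct (keyA Hs Hiso (X := fun x => Lam c x /\ Lam a x))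
        as [y [[Hcy Hay] Hby]].
      * apply J_inter; apply J_Lam.
      * intros z [_ h]; auto.
      * exists x; auto.
      * destruct (proj1 (Hg y) (conj Hay Hby)) as [g [Hin Hgy]]. exists g; split; eauto.
    + destruct (keyb (fun x => Lam c x /\ Lam b x)) as [y [[Hcy Hby] Hay]].
      * apply J_inter; apply J_Lam.
      * intros z [_ h]; auto.
      * exists x; auto.
      * destruct (proj1 (Hg y) (conj Hay Hby)) as [g [Hin Hgy]]. exists g; split; eauto.
Qed.
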